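(* Let $\lambda>1/2$. For every real $z>2$, $$\int_{-2}^{2}\frac{(4-x^2)^{\lambda-3/2}}{(z-x)^{\lambda}}\,dx \;=\; C_\lambda\,\frac{G(z)^{\lambda}}{1-G(z)^2}\;=\;C_\lambda\,\frac{G(z)^{\lambda-1}}{\sqrt{z^2-4}},$$ where $C_\lambda=\int_{-2}^{2}(4-x^2)^{\lambda-3/2}dx$. Moreover, for real $z>2$, $$\frac{G(z)^{\lambda-1}}{\sqrt{z^2-4}}=\exp\left(-\lambda\int_{\mathbb{R}}\log(z-x)\,\tau_\lambda(dx)\right),\qquad \tau_\lambda(dx)=\Big(1-\frac1\lambda\Big)\frac{\mathbf 1_{[-2,2]}(x)\,dx}{\pi\sqrt{4-x^2}}+\frac1\lambda\cdot\frac{\delta_{-2}+\delta_2}{2}(dx),$$ and the signed measure $\tau_\lambda$ (of total mass $1$) is a probability measure if and only if $\lambda\ge 1$.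
   Context: $G(z)=\int_{-2}^2\frac{1}{z-x}\frac{\sqrt{4-x^2}}{2\pi}dx=\frac{z-\sqrt{z^2-4}}{2}$ is the Cauchy–Stieltjes transform of the standard Wigner law; for real $z>2$, $G(z)\in(0,1)$. $\delta_a$ denotes the Dirac mass at $a$. *)

(* Defs.v *)
From Stdlib Require Import Reals Lra.
Open Scope R_scope.

(* Cauchy-Stieltjes transform of the semicircle law, via its closed form
   (given in the paper's context) for real z > 2. *)
Definition G (z : R) : R := (z - sqrt (z ^ 2 - 4)) / 2.

(* For b <= a the interval is empty and the integral is 0. *)
Definition ImproperInt (f : R -> R) (a b l : R) : Prop :=
  (a < b /\
   forall eps, 0 < eps -> exists delta, 0 < delta /\
     forall a' b', a < a' < a + delta -> b - delta < b' < b -> a' < b' ->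
       exists pr : Riemann_integrable f a' b', Rabs (RiemannInt pr - l) < eps)
  \/ (b <= a /\ l = 0).

(* Arcsine density 1_{[-2,2]}(x) / (pi sqrt(4 - x^2)) (on the open interval). *)
Definition arcsine_dens (x : R) : R := / (PI * sqrt (4 - x ^ 2)).

Definition ind_in (a b p : R) : R :=
  if Rle_dec a p then (if Rle_dec p b then 1 else 0) else 0.

(* tau_mass lam a b m : the signed measure
     tau_lam = (1 - 1/lam) arcsine(dx) + (1/lam) (delta_{-2} + delta_2)/2
   gives mass m to the closed interval [a,b]. *)
Definition tau_mass (lam a b m : R) : Prop :=
  exists I, ImproperInt arcsine_dens (Rmax a (-2)) (Rmin b 2) I /\
    m = (1 - / lam) * I + / lam * ((ind_in a b (-2) + ind_in a b 2) / 2).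

(* tau_lam is a (positive) measure: nonnegative on every closed interval.
   For a signed Borel measure of this form this is equivalent to positivity
   on all Borel sets. *)
Definition tau_nonneg (lam : R) : Prop :=
  forall a b m, a <= b -> tau_mass lam a b m -> 0 <= m.

(* Main.v *)
Require Import Defs.
From Stdlib Require Import Reals Lra Lia Psatz Classical ClassicalEpsilon.
Open Scope R_scope.


Lemma dlim_eq f x l1 l2 : derivable_pt_lim f x l1 -> l1 = l2 -> derivable_pt_lim f x l2.
Proof. intros H ->; exact H. Qed.

Lemma dlim_cont f x l : derivable_pt_lim f x l -> continuity_pt f x.
Proof. intro H. apply derivable_continuous_pt. exists l; exact H. Qed.

Lemma dlim_loc f g x l r : 0 < r -> (forall t, Rabs (t - x) < r -> f t = g t) ->
  derivable_pt_lim f x l -> derivable_pt_lim g x l.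
Proof.
  intros Hr Heq H eps Heps. destruct (H eps Heps) as [d Hd].
  assert (Hd' : 0 < Rmin d r) by (apply Rmin_pos; [apply cond_pos|lra]).
  exists (mkposreal _ Hd'). intros h Hh0 Hh. simpl in Hh.
  assert (Hm1 := Rmin_l d r); assert (Hm2 := Rmin_r d r).
  rewrite <- (Heq (x+h)), <- (Heq x).
  - apply Hd; auto; lra.
  - rewrite Rminus_diag, Rabs_R0; lra.
  - replace (x + h - x) with h by ring; lra.
Qed.

Lemma same_deriv_const F G f a b :
  (forall t, a < t < b -> derivable_pt_lim F t (f t)) ->
  (forall t, a < t < b -> derivable_pt_lim G t (f t)) ->
  forall x y, a < x < b -> a < y < b -> F x - G x = F y - G y.
Proof.
  intros HF HG.
  assert (K: forall x y, a < x < b -> a < y < b -> x < y -> F x - G x = F y - G y).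
  { intros x y Hx Hy Hxy.
    destruct (MVT_cor2 (fun t => F t - G t) (fun _ => 0) x y Hxy) as [c [Hc _]].
    - intros c Hc. apply dlim_eq with (f c - f c); [|ring].
      exact (derivable_pt_lim_minus F G c _ _ (HF c ltac:(lra)) (HG c ltac:(lra))).
    - lra. }
  intros x y Hx Hy. destruct (Rtotal_order x y) as [H|[H|H]].
  - auto.
  - subst; auto.
  - symmetry; auto.
Qed.

Definition RI (f : R -> R) (a b : R) : R :=
  match excluded_middle_informative (exists pr : Riemann_integrable f a b, True) with
  | left H => RiemannInt (proj1_sig (constructive_indefinite_description _ H))
  | right _ => 0 end.

Lemma RI_eq f a b (pr : Riemann_integrable f a b) : RI f a b = RiemannInt pr.
Proof.
  unfold RI. destruct excluded_middle_informative as [H|H].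
  - apply RiemannInt_P5.
  - exfalso; apply H; exists pr; trivial.
Qed.

Lemma ftc f F a b : a <= b -> (forall t, a <= t <= b -> derivable_pt_lim F t (f t)) ->
  (forall t, a <= t <= b -> continuity_pt f t) ->
  forall pr : Riemann_integrable f a b, RiemannInt pr = F b - F a.
Proof.
  intros Hab HF Hc pr.
  rewrite (RiemannInt_P20 Hab (FTC_P1 Hab Hc) pr).
  destruct (antiderivative_Ucte f _ F a b (RiemannInt_P29 Hab Hc)) as [C HC].
  - split; [|exact Hab]. intros x Hx. exists (exist _ (f x) (HF x Hx)).
    symmetry. apply derive_pt_eq_0. apply HF; auto.
  - rewrite !HC; [ring| lra | lra].
Qed.

Lemma RI_ftc f F a b :
  (forall t, (a <= t <= b \/ b <= t <= a) -> derivable_pt_lim F t (f t)) ->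
  (forall t, (a <= t <= b \/ b <= t <= a) -> continuity_pt f t) -> RI f a b = F b - F a.
Proof.
  intros HF Hc. destruct (Rle_dec a b) as [Hab|Hab].
  - assert (Hc' : forall t, a <= t <= b -> continuity_pt f t) by (intros; apply Hc; lra).
    rewrite (RI_eq _ _ _ (continuity_implies_RiemannInt Hab Hc')).
    apply ftc; auto; intros; apply HF; lra.
  - assert (Hba : b <= a) by lra.
    assert (Hc' : forall t, b <= t <= a -> continuity_pt f t) by (intros; apply Hc; lra).
    set (pr' := continuity_implies_RiemannInt Hba Hc').
    rewrite (RI_eq _ _ _ (RiemannInt_P1 pr')).
    rewrite (RiemannInt_P8 (RiemannInt_P1 pr') pr').
    rewrite (ftc f F b a Hba); [ring| |auto]. intros; apply HF; lra.
Qed.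

Lemma prim_deriv f a b c : (forall t, a < t < b -> continuity_pt f t) -> a < c < b ->
  forall x, a < x < b -> derivable_pt_lim (fun t => RI f c t) x (f x).
Proof.
  intros Hf Hc x Hx.
  set (a' := (a + Rmin c x)/2). set (b' := (b + Rmax c x)/2).
  assert (H1 := Rmin_l c x); assert (H2 := Rmin_r c x).
  assert (H3 := Rmax_l c x); assert (H4 := Rmax_r c x).
  assert (H5 : a < Rmin c x) by (unfold Rmin; destruct Rle_dec; lra).
  assert (H6 : Rmax c x < b) by (unfold Rmax; destruct Rle_dec; lra).
  assert (Hab : a' <= b') by (unfold a', b'; lra).
  assert (Hc' : forall t, a' <= t <= b' -> continuity_pt f t)
    by (intros t Ht; apply Hf; unfold a', b' in Ht; lra).
  set (P := primitive Hab (FTC_P1 Hab Hc')).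
  apply dlim_loc with (f := fun t => P t - P c) (r := Rmin (x - a') (b' - x)).
  - apply Rmin_pos; unfold a', b'; lra.
  - intros t Ht. assert (Hm1 := Rmin_l (x - a') (b' - x)); assert (Hm2 := Rmin_r (x - a') (b' - x)).
    apply Rabs_def2 in Ht.
    symmetry. apply RI_ftc.
    + intros s Hs. unfold P. apply RiemannInt_P28. unfold a', b' in *; lra.
    + intros s Hs. apply Hc'. unfold a', b' in *; lra.
  - assert (Hxx : a' <= x <= b') by (unfold a', b'; lra).
    apply dlim_eq with (f x - 0); [|ring].
    exact (derivable_pt_lim_minus P (fct_cte (P c)) x _ _
             (RiemannInt_P28 Hab Hc' Hxx) (derivable_pt_lim_const (P c) x)).
Qed.

Definition limL (F : R -> R) (b L : R) := forall eps, 0 < eps ->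
  exists d, 0 < d /\ forall t, b - d < t < b -> Rabs (F t - L) < eps.
Definition limR (F : R -> R) (a L : R) := forall eps, 0 < eps ->
  exists d, 0 < d /\ forall t, a < t < a + d -> Rabs (F t - L) < eps.

Lemma improper_of_prim f F a b La Lb : a < b ->
  (forall t, a < t < b -> derivable_pt_lim F t (f t)) ->
  (forall t, a < t < b -> continuity_pt f t) ->
  limR F a La -> limL F b Lb -> ImproperInt f a b (Lb - La).
Proof.
  intros Hab HF Hc HA HB. left. split; [exact Hab|]. intros eps Heps.
  destruct (HA (eps/2)) as [d1 [Hd1 H1]]; [lra|].
  destruct (HB (eps/2)) as [d2 [Hd2 H2]]; [lra|].
  exists (Rmin d1 d2). split; [apply Rmin_pos; lra|].
  intros a' b' Ha' Hb' Hab'.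
  assert (Hm1 := Rmin_l d1 d2); assert (Hm2 := Rmin_r d1 d2).
  assert (Hle : a' <= b') by lra.
  exists (continuity_implies_RiemannInt Hle (fun t Ht => Hc t ltac:(lra))).
  rewrite (ftc f F a' b' Hle).
  - assert (E1 := H1 a' ltac:(lra)). assert (E2 := H2 b' ltac:(lra)).
    apply Rabs_def2 in E1; apply Rabs_def2 in E2. apply Rabs_def1; lra.
  - intros t Ht; apply HF; lra.
  - intros t Ht; apply Hc; lra.
Qed.

Lemma incr_limL F c b M : c < b -> (forall s t, c <= s <= t -> t < b -> F s <= F t) ->
  (forall t, c <= t < b -> F t <= M) -> exists L, limL F b L.
Proof.
  intros Hcb Hinc Hb.
  set (E := fun y => exists t, c <= t < b /\ y = F t).
  destruct (completeness E) as [L [HL1 HL2]].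
  - exists M. intros y [t [Ht ->]]. auto.
  - exists (F c). exists c. split; [lra|auto].
  - exists L. intros eps Heps.
    assert (Hex : exists t0, c <= t0 < b /\ L - eps < F t0).
    { apply NNPP. intro Hn. assert (L <= L - eps); [|lra].
      apply HL2. intros y [t [Ht ->]].
      destruct (Rle_dec (F t) (L - eps)) as [h|h]; [exact h|].
      exfalso; apply Hn; exists t; split; [auto|lra]. }
    destruct Hex as [t0 [Ht0 Hf0]].
    exists (b - t0). split; [lra|]. intros t Ht.
    assert (F t0 <= F t) by (apply Hinc; lra).
    assert (F t <= L) by (apply HL1; exists t; split; [lra|auto]).
    apply Rabs_def1; lra.
Qed.

Lemma limR_of_refl F a L : limL (fun t => F (- t)) (- a) L -> limR F a L.
Proof.
  intros H eps Heps. destruct (H eps Heps) as [d [Hd H1]]. exists d; split; auto.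
  intros t Ht. replace t with (- - t) by ring. apply H1. lra.
Qed.

Lemma cont_limL F b : continuity_pt F b -> limL F b (F b).
Proof.
  intros H eps Heps. destruct (H eps Heps) as [d [Hd H1]]. exists d; split; auto.
  intros t Ht. apply (H1 t). split. split; [exact I|intro; lra].
  simpl; unfold R_dist. rewrite Rabs_left; lra.
Qed.

Lemma cont_limR F a : continuity_pt F a -> limR F a (F a).
Proof.
  intros H eps Heps. destruct (H eps Heps) as [d [Hd H1]]. exists d; split; auto.
  intros t Ht. apply (H1 t). split. split; [exact I|intro; lra].
  simpl; unfold R_dist. rewrite Rabs_right; lra.
Qed.

Lemma limL_plus F G b L1 L2 : limL F b L1 -> limL G b L2 -> limL (fun t => F t + G t) b (L1 + L2).
Proof.
  intros H1 H2 eps Heps. destruct (H1 (eps/2)) as [d1 [Hd1 K1]]; [lra|].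
  destruct (H2 (eps/2)) as [d2 [Hd2 K2]]; [lra|].
  exists (Rmin d1 d2); split; [apply Rmin_pos; lra|].
  intros t Ht. assert (Hm1 := Rmin_l d1 d2); assert (Hm2 := Rmin_r d1 d2).
  assert (E1 := K1 t ltac:(lra)); assert (E2 := K2 t ltac:(lra)).
  apply Rabs_def2 in E1; apply Rabs_def2 in E2; apply Rabs_def1; lra.
Qed.

Lemma limR_plus F G b L1 L2 : limR F b L1 -> limR G b L2 -> limR (fun t => F t + G t) b (L1 + L2).
Proof.
  intros H1 H2 eps Heps. destruct (H1 (eps/2)) as [d1 [Hd1 K1]]; [lra|].
  destruct (H2 (eps/2)) as [d2 [Hd2 K2]]; [lra|].
  exists (Rmin d1 d2); split; [apply Rmin_pos; lra|].
  intros t Ht. assert (Hm1 := Rmin_l d1 d2); assert (Hm2 := Rmin_r d1 d2).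
  assert (E1 := K1 t ltac:(lra)); assert (E2 := K2 t ltac:(lra)).
  apply Rabs_def2 in E1; apply Rabs_def2 in E2; apply Rabs_def1; lra.
Qed.

Lemma limL_scal F b L k : limL F b L -> limL (fun t => k * F t) b (k * L).
Proof.
  intros H eps Heps. destruct (H (eps / (Rabs k + 1))) as [d [Hd K]].
  { apply Rdiv_lt_0_compat; [lra|]. assert (0 <= Rabs k) by apply Rabs_pos. lra. }
  exists d; split; auto. intros t Ht.
  rewrite <- Rmult_minus_distr_l, Rabs_mult.
  assert (E := K t Ht). assert (0 <= Rabs k) by apply Rabs_pos.
  apply Rle_lt_trans with (Rabs k * (eps / (Rabs k + 1))).
  - apply Rmult_le_compat_l; lra.
  - apply Rlt_le_trans with ((Rabs k + 1) * (eps / (Rabs k + 1))).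
    + apply Rmult_lt_compat_r; [apply Rdiv_lt_0_compat; lra|lra].
    + right; field; lra.
Qed.

Lemma limR_scal F b L k : limR F b L -> limR (fun t => k * F t) b (k * L).
Proof.
  intros H eps Heps. destruct (H (eps / (Rabs k + 1))) as [d [Hd K]].
  { apply Rdiv_lt_0_compat; [lra|]. assert (0 <= Rabs k) by apply Rabs_pos. lra. }
  exists d; split; auto. intros t Ht.
  rewrite <- Rmult_minus_distr_l, Rabs_mult.
  assert (E := K t Ht). assert (0 <= Rabs k) by apply Rabs_pos.
  apply Rle_lt_trans with (Rabs k * (eps / (Rabs k + 1))).
  - apply Rmult_le_compat_l; lra.
  - apply Rlt_le_trans with ((Rabs k + 1) * (eps / (Rabs k + 1))).
    + apply Rmult_lt_compat_r; [apply Rdiv_lt_0_compat; lra|lra].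
    + right; field; lra.
Qed.

Lemma limL_ext F G b L r : 0 < r -> (forall t, b - r < t < b -> F t = G t) -> limL F b L -> limL G b L.
Proof.
  intros Hr He H eps Heps. destruct (H eps Heps) as [d [Hd K]].
  exists (Rmin d r); split; [apply Rmin_pos; lra|]. intros t Ht.
  assert (Hm1 := Rmin_l d r); assert (Hm2 := Rmin_r d r).
  rewrite <- He by lra. apply K; lra.
Qed.

Lemma limR_ext F G b L r : 0 < r -> (forall t, b < t < b + r -> F t = G t) -> limR F b L -> limR G b L.
Proof.
  intros Hr He H eps Heps. destruct (H eps Heps) as [d [Hd K]].
  exists (Rmin d r); split; [apply Rmin_pos; lra|]. intros t Ht.
  assert (Hm1 := Rmin_l d r); assert (Hm2 := Rmin_r d r).
  rewrite <- He by lra. apply K; lra.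
Qed.

Lemma limL_comp H psi b b' L : limL H b' L ->
  (forall eps, 0 < eps -> exists d, 0 < d /\ forall t, b - d < t < b -> b' - eps < psi t < b') ->
  limL (fun t => H (psi t)) b L.
Proof.
  intros HH Hp eps Heps. destruct (HH eps Heps) as [d [Hd K]].
  destruct (Hp d Hd) as [d' [Hd' K']]. exists d'; split; [exact Hd'|].
  intros t Ht. apply K. apply K'. auto.
Qed.

Lemma limR_comp H psi b b' L : limR H b' L ->
  (forall eps, 0 < eps -> exists d, 0 < d /\ forall t, b < t < b + d -> b' < psi t < b' + eps) ->
  limR (fun t => H (psi t)) b L.
Proof.
  intros HH Hp eps Heps. destruct (HH eps Heps) as [d [Hd K]].
  destruct (Hp d Hd) as [d' [Hd' K']]. exists d'; split; [exact Hd'|].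
  intros t Ht. apply K. apply K'. auto.
Qed.

Lemma incr_of_deriv F f c b : (forall x, c <= x < b -> derivable_pt_lim F x (f x) /\ 0 <= f x) ->
  forall s t, c <= s <= t -> t < b -> F s <= F t.
Proof.
  intros H s t Hs Ht. destruct (Req_dec s t) as [->|Hne]; [lra|].
  assert (Hd : forall x, s <= x <= t -> derivable_pt_lim F x (f x)) by (intros x Hx; apply H; lra).
  destruct (MVT_cor2 F f s t ltac:(lra) Hd) as [x [Hx1 Hx2]].
  assert (0 <= f x) by (apply H; lra). nra.
Qed.

Lemma dlim_lin k m x : derivable_pt_lim (fun t => k * t + m) x k.
Proof.
  intros eps Heps. exists (mkposreal 1 Rlt_0_1). intros h Hh _.
  replace ((k * (x + h) + m - (k * x + m)) / h - k) with 0 by (field; auto).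
  rewrite Rabs_R0; lra.
Qed.

Lemma sqrt4 x : -2 < x < 2 -> sqrt (4 - x ^ 2) = 2 * sqrt (1 - Rsqr (x / 2)).
Proof.
  intros Hx. replace (4 - x ^ 2) with ((2*2) * (1 - Rsqr (x / 2))) by (unfold Rsqr; field).
  rewrite sqrt_mult, sqrt_square; try lra.
  unfold Rsqr. nra.
Qed.

Lemma acos_half_deriv x : -2 < x < 2 ->
  derivable_pt_lim (fun t => acos (t / 2)) x (-1 / sqrt (4 - x ^ 2)).
Proof.
  intros Hx. assert (Hy : -1 < x/2 < 1) by lra.
  assert (H1 := derive_pt_eq_1 _ _ _ _ (derive_pt_acos (x/2) Hy)).
  assert (H2 := dlim_lin (/2) 0 x).
  assert (E : forall t, /2 * t + 0 = t / 2) by (intro; field).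
  assert (H1' : derivable_pt_lim acos (/2 * x + 0) (-1 / sqrt (1 - Rsqr (x/2)))) by (rewrite E; exact H1).
  assert (H3 := derivable_pt_lim_comp (fun t => /2 * t + 0) acos x _ _ H2 H1').
  apply dlim_eq with (-1 / sqrt (1 - Rsqr (x/2)) * /2).
  - eapply dlim_loc with (r := 1); [lra| |exact H3]. intros t _. unfold comp. rewrite E. reflexivity.
  - rewrite sqrt4 by lra. assert (0 < sqrt (1 - Rsqr (x/2))).
    { apply sqrt_lt_R0. unfold Rsqr. nra. }
    field. lra.
Qed.

Lemma sqrt4_pos x : -2 < x < 2 -> 0 < sqrt (4 - x ^ 2).
Proof. intros. apply sqrt_lt_R0. nra. Qed.

Lemma acos_limL b : -2 < b <= 2 -> limL (fun x => acos (x / 2)) b (acos (b / 2)).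
Proof.
  intros Hb. destruct (Req_dec b 2) as [->|Hne].
  - replace (2/2) with 1 by field. rewrite acos_1.
    intros eps Heps. set (e := Rmin eps (PI/2)).
    assert (He : 0 < e) by (apply Rmin_pos; [lra| assert (H:=PI_RGT_0); lra]).
    assert (He1 : e <= eps) by apply Rmin_l; assert (He2 : e <= PI/2) by apply Rmin_r.
    assert (Hce : cos e < 1).
    { rewrite <- cos_0. apply cos_decreasing_1; try lra; assert (H:=PI_RGT_0); lra. }
    assert (Hcb := COS_bound e). exists (2 - 2 * cos e). split; [lra|]. intros t Ht.
    assert (Hb0 := acos_bound (t/2)).
    assert (Hlt : acos (t/2) < e).
    { destruct (Rlt_le_dec (acos (t/2)) e) as [h|h]; [exact h|].
      destruct (Req_dec (acos (t/2)) e) as [h'|h'].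
      - assert (cos (acos (t/2)) = t/2) by (apply cos_acos; lra). rewrite h' in H. lra.
      - assert (cos (acos (t/2)) < cos e).
        { apply cos_decreasing_1; try lra; assert (H:=PI_RGT_0); lra. }
        rewrite cos_acos in H by lra. lra. }
    rewrite Rminus_0_r, Rabs_right; lra.
  - exact (cont_limL (fun x => acos (x/2)) b (dlim_cont _ _ _ (acos_half_deriv b ltac:(lra)))).
Qed.

Lemma acos_limR a : -2 <= a < 2 -> limR (fun x => acos (x / 2)) a (acos (a / 2)).
Proof.
  intros Ha. destruct (Req_dec a (-2)) as [->|Hne].
  - replace (-2/2) with (Ropp 1) by field. rewrite acos_opp, acos_1.
    intros eps Heps. set (e := Rmin eps (PI/2)).
    assert (He : 0 < e) by (apply Rmin_pos; [lra| assert (H:=PI_RGT_0); lra]).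
    assert (He1 : e <= eps) by apply Rmin_l; assert (He2 : e <= PI/2) by apply Rmin_r.
    assert (Hce : cos e < 1).
    { rewrite <- cos_0. apply cos_decreasing_1; try lra; assert (H:=PI_RGT_0); lra. }
    assert (Hcb := COS_bound e). exists (2 - 2 * cos e). split; [lra|]. intros t Ht.
    assert (Hb0 := acos_bound (t/2)).
    assert (Hlt : PI - e < acos (t/2)).
    { destruct (Rlt_le_dec (PI - e) (acos (t/2))) as [h|h]; [exact h|].
      assert (Hc : cos (PI - e) <= cos (acos (t/2))).
      { destruct (Req_dec (acos (t/2)) (PI - e)) as [h'|h'].
        - rewrite h'; lra.
        - left. apply cos_decreasing_1; try lra. }
      rewrite cos_acos in Hc by lra. rewrite cos_minus, cos_PI, sin_PI in Hc. lra. }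
    apply Rabs_def1; lra.
  - exact (cont_limR (fun x => acos (x/2)) a (dlim_cont _ _ _ (acos_half_deriv a ltac:(lra)))).
Qed.

Lemma limL_contcomp Phi g b L : continuity_pt Phi L -> limL g b L -> limL (fun t => Phi (g t)) b (Phi L).
Proof.
  intros HP Hg eps Heps. destruct (HP eps Heps) as [d [Hd H1]].
  destruct (Hg d Hd) as [d' [Hd' H2]]. exists d'; split; [exact Hd'|]. intros t Ht.
  destruct (Req_dec (g t) L) as [E|E].
  - rewrite E, Rminus_diag, Rabs_R0; lra.
  - apply (H1 (g t)). split; [split; [exact I|auto]|]. apply H2; auto.
Qed.

Lemma limR_contcomp Phi g b L : continuity_pt Phi L -> limR g b L -> limR (fun t => Phi (g t)) b (Phi L).
Proof.
  intros HP Hg eps Heps. destruct (HP eps Heps) as [d [Hd H1]].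
  destruct (Hg d Hd) as [d' [Hd' H2]]. exists d'; split; [exact Hd'|]. intros t Ht.
  destruct (Req_dec (g t) L) as [E|E].
  - rewrite E, Rminus_diag, Rabs_R0; lra.
  - apply (H1 (g t)). split; [split; [exact I|auto]|]. apply H2; auto.
Qed.

Lemma arc_improper (h Phi f : R -> R) a b : -2 <= a -> a < b -> b <= 2 ->
  (forall t, derivable_pt_lim Phi t (h t)) -> (forall t, continuity_pt h t) ->
  (forall x, a < x < b -> f x = h (acos (x / 2)) * arcsine_dens x) ->
  ImproperInt f a b ((Phi (acos (a / 2)) - Phi (acos (b / 2))) / PI).
Proof.
  intros Ha Hab Hb HP Hh Hf.
  set (F := fun x => - / PI * Phi (acos (x / 2))).
  assert (HPI := PI_RGT_0).
  replace ((Phi (acos (a / 2)) - Phi (acos (b / 2))) / PI)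
    with (- / PI * Phi (acos (b / 2)) - - / PI * Phi (acos (a / 2))) by (field; lra).
  apply improper_of_prim with (F := F); [exact Hab| | | |].
  - intros t Ht. unfold F. rewrite Hf by lra.
    apply dlim_eq with (- / PI * (h (acos (t/2)) * (-1 / sqrt (4 - t ^ 2)))).
    + apply (derivable_pt_lim_scal (fun x => Phi (acos (x / 2)))).
      exact (derivable_pt_lim_comp _ Phi _ _ _ (acos_half_deriv t ltac:(lra)) (HP _)).
    + unfold arcsine_dens. assert (H := sqrt4_pos t ltac:(lra)). field. lra.
  - intros t Ht. assert (continuity_pt (fun x => h (acos (x / 2)) * arcsine_dens x) t).
    { apply continuity_pt_mult.
      - apply (continuity_pt_comp (fun x => acos (x/2)) h). 
        + apply (dlim_cont _ _ _ (acos_half_deriv t ltac:(lra))).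
        + apply Hh.
      - unfold arcsine_dens. apply continuity_pt_inv.
        + apply continuity_pt_mult; [apply continuity_pt_const; intros u v; reflexivity|].
          apply (continuity_pt_comp (fun x => 4 - x ^ 2) sqrt).
          * apply derivable_continuous_pt. apply derivable_pt_minus.
            apply derivable_pt_const. apply derivable_pt_pow.
          * apply continuity_pt_sqrt. nra.
        + assert (H := sqrt4_pos t ltac:(lra)). nra. }
    intros eps Heps. destruct (H eps Heps) as [d [Hd H1]].
    exists (Rmin d (Rmin (t - a) (b - t))). split.
    { apply Rmin_pos; [lra| apply Rmin_pos; lra]. }
    intros x [Hx1 Hx2]. assert (Hm1 := Rmin_l d (Rmin (t - a) (b - t))).
    assert (Hm2 := Rmin_r d (Rmin (t - a) (b - t))). assert (Hm3 := Rmin_l (t - a) (b - t)).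
    assert (Hm4 := Rmin_r (t - a) (b - t)). unfold R_dist in *. simpl in Hx2. unfold R_dist in Hx2.
    apply Rabs_def2 in Hx2.
    rewrite !Hf by lra. apply H1. split; [auto|]. simpl; unfold R_dist. apply Rabs_def1; lra.
  - unfold F. apply limR_scal. apply limR_contcomp.
    + apply (dlim_cont _ _ _ (HP _)).
    + apply acos_limR. lra.
  - unfold F. apply limL_scal. apply limL_contcomp.
    + apply (dlim_cont _ _ _ (HP _)).
    + apply acos_limL. lra.
Qed.

Lemma dens_improper a b : -2 <= a -> a < b -> b <= 2 ->
  ImproperInt arcsine_dens a b ((acos (a / 2) - acos (b / 2)) / PI).
Proof.
  intros Ha Hab Hb.
  assert (H := arc_improper (fun _ => 1) (fun t => 1 * t + 0) arcsine_dens a b Ha Hab Hb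
    (fun t => dlim_lin 1 0 t) (fun t => continuity_pt_const (fun _ : R => 1) t (fun u v => eq_refl))
    (fun x _ => eq_sym (Rmult_1_l _))).
  replace ((acos (a / 2) - acos (b / 2)) / PI) with ((1 * acos (a / 2) + 0 - (1 * acos (b / 2) + 0)) / PI) by (unfold Rdiv; ring).
  exact H.
Qed.

Lemma acos_m1 : acos (-2/2) = PI.
Proof. replace (-2/2) with (Ropp 1) by field. rewrite acos_opp, acos_1. ring. Qed.
Lemma acos_p1 : acos (2/2) = 0.
Proof. replace (2/2) with 1 by field. apply acos_1. Qed.

Lemma dens_total : ImproperInt arcsine_dens (-2) 2 1.
Proof.
  replace 1 with ((acos (-2 / 2) - acos (2 / 2)) / PI).
  - apply dens_improper; lra.
  - rewrite acos_m1, acos_p1. assert (H := PI_RGT_0). field. lra.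
Qed.

Lemma improper_nonneg f a b I : (forall x, a < x < b -> 0 <= f x) -> ImproperInt f a b I -> 0 <= I.
Proof.
  intros Hf [[Hab H]|[_ ->]]; [|lra].
  destruct (Rle_dec 0 I) as [h|h]; [exact h|exfalso].
  destruct (H (- I) ltac:(lra)) as [d [Hd K]].
  set (m := Rmin d (b - a)). assert (Hm : 0 < m) by (apply Rmin_pos; lra).
  assert (Hm1 : m <= d) by apply Rmin_l. assert (Hm2 : m <= b - a) by apply Rmin_r.
  destruct (K (a + m/3) (b - m/3) ltac:(lra) ltac:(lra) ltac:(lra)) as [pr Hpr].
  assert (Hle : a + m/3 <= b - m/3) by lra.
  assert (H0 := RiemannInt_P19 (RiemannInt_P14 (a + m/3) (b - m/3) 0) pr Hle).
  rewrite RiemannInt_P15 in H0.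
  assert (0 * (b - m / 3 - (a + m / 3)) <= RiemannInt pr).
  { apply H0. intros x Hx. unfold fct_cte. apply Hf. lra. }
  apply Rabs_def2 in Hpr. lra.
Qed.

Lemma dens_pos x : -2 < x < 2 -> 0 <= arcsine_dens x.
Proof.
  intros Hx. unfold arcsine_dens. left. apply Rinv_0_lt_compat.
  apply Rmult_lt_0_compat; [apply PI_RGT_0| apply sqrt4_pos; lra].
Qed.

Lemma part3 lam : 1/2 < lam -> forall a b : R, a <= -2 -> 2 <= b -> tau_mass lam a b 1.
Proof.
  intros Hl a b Ha Hb. exists 1. split.
  - rewrite Rmax_right by lra. rewrite Rmin_right by lra. apply dens_total.
  - unfold ind_in. destruct (Rle_dec a (-2)); [|lra]. destruct (Rle_dec (-2) b); [|lra].
    destruct (Rle_dec a 2); [|lra]. destruct (Rle_dec 2 b); [|lra]. field. lra.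
Qed.

Lemma part4 lam : 1/2 < lam -> (tau_nonneg lam <-> 1 <= lam).
Proof.
  intros Hl. split.
  - intros H. destruct (Rle_dec 1 lam) as [h|h]; [exact h|exfalso].
    assert (Hi : ImproperInt arcsine_dens (Rmax 0 (-2)) (Rmin 1 2) ((acos (0 / 2) - acos (1 / 2)) / PI)).
    { rewrite Rmax_left by lra. rewrite Rmin_left by lra. apply dens_improper; lra. }
    assert (E : (acos (0 / 2) - acos (1 / 2)) / PI = / 6).
    { replace (0/2) with 0 by field. rewrite acos_0. 
      replace (1/2) with (cos (PI/3)) by apply cos_PI3. rewrite acos_cos.
      - assert (HP := PI_RGT_0). field. lra.
      - assert (HP := PI_RGT_0). lra. }
    rewrite E in Hi.
    assert (Hm := H 0 1 ((1 - / lam) * / 6 + / lam * ((ind_in 0 1 (-2) + ind_in 0 1 2) / 2)) ltac:(lra)).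
    assert (Hz1 : ind_in 0 1 (-2) = 0) by (unfold ind_in; destruct (Rle_dec 0 (-2)); [lra|reflexivity]).
    assert (Hz2 : ind_in 0 1 2 = 0) by (unfold ind_in; destruct (Rle_dec 0 2); [|lra]; destruct (Rle_dec 2 1); [lra|reflexivity]).
    rewrite Hz1, Hz2 in Hm.
    assert (Hneg : (1 - / lam) * / 6 + / lam * ((0 + 0) / 2) < 0).
    { assert (/ lam > 1). { rewrite <- Rinv_1. apply Rinv_lt_contravar; lra. } lra. }
    assert (0 <= (1 - / lam) * / 6 + / lam * ((0 + 0) / 2)); [|lra].
    apply Hm. exists (/ 6). split; [exact Hi|]. rewrite Hz1, Hz2. reflexivity.
  - intros H1 a b m Hab [I [HI ->]].
    assert (HI0 : 0 <= I).
    { apply (improper_nonneg arcsine_dens (Rmax a (-2)) (Rmin b 2)); [|exact HI].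
      intros x Hx. apply dens_pos. split.
      - apply Rle_lt_trans with (2 := proj1 Hx). apply Rmax_r.
      - apply Rlt_le_trans with (1 := proj2 Hx). apply Rmin_r. }
    assert (Hinv : 0 < / lam) by (apply Rinv_0_lt_compat; lra).
    assert (Hinv1 : / lam <= 1). { rewrite <- Rinv_1. apply Rinv_le_contravar; lra. }
    assert (0 <= ind_in a b (-2)) by (unfold ind_in; repeat destruct Rle_dec; lra).
    assert (0 <= ind_in a b 2) by (unfold ind_in; repeat destruct Rle_dec; lra).
    apply Rplus_le_le_0_compat.
    + apply Rmult_le_pos; lra.
    + apply Rmult_le_pos; lra.
Qed.

Lemma dlim_ext f g x l : (forall t, f t = g t) -> derivable_pt_lim f x l -> derivable_pt_lim g x l.
Proof. intros H. apply dlim_loc with (r := 1); [lra|]. intros; apply H. Qed.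

Lemma cont_ext f g x : (forall t, f t = g t) -> continuity_pt f x -> continuity_pt g x.
Proof.
  intros H Hc eps Heps. destruct (Hc eps Heps) as [d [Hd H1]]. exists d; split; auto.
  intros y Hy. rewrite <- !H. apply H1; auto.
Qed.

Lemma gprim_deriv f : (forall t, continuity_pt f t) -> forall x, derivable_pt_lim (fun t => RI f 0 t) x (f x).
Proof.
  intros Hf x. apply prim_deriv with (a := - (Rabs x + 1)) (b := Rabs x + 1).
  - intros; apply Hf.
  - assert (0 <= Rabs x) by apply Rabs_pos. lra.
  - split; [apply Rlt_le_trans with (- Rabs x); [lra| apply Ropp_le_cancel; rewrite Ropp_involutive; apply Rle_trans with (Rabs (-x)); [apply RRle_abs| rewrite Rabs_Ropp; lra]] |].
    apply Rle_lt_trans with (Rabs x); [apply RRle_abs|lra].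
Qed.

Lemma RI_00 f : (forall t, continuity_pt f t) -> RI f 0 0 = 0.
Proof.
  intros Hf. rewrite (RI_eq _ _ _ (continuity_implies_RiemannInt (Rle_refl 0) (fun t _ => Hf t))).
  apply RiemannInt_P9.
Qed.

Definition hv (v t : R) : R := ln (1 - 2 * v * cos t + v ^ 2).

Lemma hv_arg v t : Rabs v < 1 -> (1 - Rabs v) ^ 2 <= 1 - 2 * v * cos t + v ^ 2 <= (1 + Rabs v) ^ 2.
Proof.
  intros Hv. assert (Hc := COS_bound t).
  destruct (Rcase_abs v) as [h|h]; [rewrite Rabs_left by lra|rewrite Rabs_right by lra]; split; nra.
Qed.

Lemma hv_pos v t : Rabs v < 1 -> 0 < 1 - 2 * v * cos t + v ^ 2.
Proof.
  intros Hv. assert (H := hv_arg v t Hv). assert (0 < (1 - Rabs v) ^ 2).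
  { apply pow_lt. lra. } lra.
Qed.

Lemma dlim_cos_aff a b x : derivable_pt_lim (fun t => a + b * cos t) x (b * - sin x).
Proof.
  apply dlim_eq with (0 + b * - sin x); [|ring].
  apply (derivable_pt_lim_plus (fct_cte a) (mult_real_fct b cos)).
  - apply derivable_pt_lim_const.
  - apply derivable_pt_lim_scal. apply derivable_pt_lim_cos.
Qed.

Lemma hv_cont v : Rabs v < 1 -> forall t, continuity_pt (hv v) t.
Proof.
  intros Hv t. unfold hv.
  apply (cont_ext (comp ln (fun t => (1 + v ^ 2) + (- 2 * v) * cos t))).
  { intro s. unfold comp. f_equal. ring. }
  apply continuity_pt_comp.
  - apply (dlim_cont _ _ _ (dlim_cos_aff _ _ t)).
  - assert (H := hv_pos v t Hv).
    assert (H2 : 0 < 1 + v ^ 2 + -2 * v * cos t) by (replace (1 + v ^ 2 + -2 * v * cos t) with (1 - 2 * v * cos t + v ^ 2) by ring; exact H).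
    apply (dlim_cont _ _ _ (derivable_pt_lim_ln _ H2)).
Qed.

Definition Psi (v t : R) : R := RI (hv v) 0 t.
Definition J (v : R) : R := Psi v PI.

Lemma Psi_deriv v : Rabs v < 1 -> forall t, derivable_pt_lim (Psi v) t (hv v t).
Proof. intros Hv t. unfold Psi. apply gprim_deriv. apply hv_cont; auto. Qed.

Lemma Psi_0 v : Rabs v < 1 -> Psi v 0 = 0.
Proof. intros Hv. unfold Psi. apply RI_00. apply hv_cont; auto. Qed.

Lemma dlim_Psi_aff v k m x : Rabs v < 1 ->
  derivable_pt_lim (fun t => Psi v (k * t + m)) x (hv v (k * x + m) * k).
Proof.
  intros Hv. exact (derivable_pt_lim_comp (fun t => k * t + m) (Psi v) x _ _ (dlim_lin k m x) (Psi_deriv v Hv _)).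
Qed.

Lemma pi_bounds : 0 < PI <= 4.
Proof. split; [apply PI_RGT_0|apply PI_4]. Qed.

Lemma cos_PI_m t : cos (-1 * t + PI) = - cos t.
Proof. replace (-1 * t + PI) with (PI - t) by ring. rewrite cos_minus, cos_PI, sin_PI. ring. Qed.

Lemma J_opp v : Rabs v < 1 -> J (- v) = J v.
Proof.
  intros Hv. assert (Hv' : Rabs (- v) < 1) by (rewrite Rabs_Ropp; auto).
  assert (HP := pi_bounds).
  assert (D2 : forall t, derivable_pt_lim (fun t => - Psi v (-1 * t + PI)) t (hv (- v) t)).
  { intro t. apply dlim_eq with (-1 * (hv v (-1*t+PI) * -1)).
    - apply (dlim_ext (mult_real_fct (-1) (fun t => Psi v (-1*t+PI)))).
      + intro s. unfold mult_real_fct. ring.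
      + exact (derivable_pt_lim_scal (fun t => Psi v (-1*t+PI)) (-1) t _ (dlim_Psi_aff v (-1) PI t Hv)).
    - unfold hv. rewrite cos_PI_m.
      replace (1 - 2 * v * - cos t + v ^ 2) with (1 - 2 * - v * cos t + (- v) ^ 2) by ring. ring. }
  assert (K := same_deriv_const (Psi (- v)) (fun t => - Psi v (-1 * t + PI)) (hv (- v)) (-10) 10
     (fun t _ => Psi_deriv (- v) Hv' t) (fun t _ => D2 t) 0 PI ltac:(lra) ltac:(lra)).
  simpl in K. replace (-1 * 0 + PI) with PI in K by ring. replace (-1 * PI + PI) with 0 in K by ring.
  rewrite !Psi_0 in K by auto. unfold J. lra.
Qed.

Lemma Psi_2PI w : Rabs w < 1 -> Psi w (2 * PI) = 2 * Psi w PI.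
Proof.
  intros Hw. assert (HP := pi_bounds).
  assert (D1 : forall t, derivable_pt_lim (fun t => - Psi w (-1 * t + 2 * PI)) t (hv w t)).
  { intro t. apply dlim_eq with (-1 * (hv w (-1*t+2*PI) * -1)).
    - apply (dlim_ext (mult_real_fct (-1) (fun t => Psi w (-1*t+2*PI)))).
      + intro s. unfold mult_real_fct. ring.
      + exact (derivable_pt_lim_scal (fun t => Psi w (-1*t+2*PI)) (-1) t _ (dlim_Psi_aff w (-1) (2*PI) t Hw)).
    - unfold hv. replace (-1 * t + 2 * PI) with (2 * PI - t) by ring.
      rewrite cos_minus, cos_2PI, sin_2PI. replace (1 * cos t + 0 * sin t) with (cos t) by ring. ring. }
  assert (K := same_deriv_const (fun t => - Psi w (-1 * t + 2 * PI)) (Psi w) (hv w) (-10) 10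
     (fun t _ => D1 t) (fun t _ => Psi_deriv w Hw t) 0 PI ltac:(lra) ltac:(lra)).
  simpl in K. replace (-1 * 0 + 2 * PI) with (2 * PI) in K by ring.
  replace (-1 * PI + 2 * PI) with PI in K by ring.
  rewrite !Psi_0 in K by auto. lra.
Qed.

Lemma abs_sq_lt v : Rabs v < 1 -> Rabs (v ^ 2) < 1.
Proof.
  intros Hv. rewrite <- RPow_abs. assert (0 <= Rabs v) by apply Rabs_pos. nra.
Qed.

Lemma J_sq v : Rabs v < 1 -> J (v ^ 2) = 2 * J v.
Proof.
  intros Hv. assert (Hv' : Rabs (- v) < 1) by (rewrite Rabs_Ropp; auto).
  assert (Hv2 := abs_sq_lt v Hv). assert (HP := pi_bounds).
  assert (D2 : forall t, derivable_pt_lim (fun t => Psi v t + Psi (- v) t) t (hv v t + hv (- v) t)).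
  { intro t. exact (derivable_pt_lim_plus (Psi v) (Psi (-v)) t _ _ (Psi_deriv v Hv t) (Psi_deriv (-v) Hv' t)). }
  assert (D3 : forall t, derivable_pt_lim (fun t => / 2 * Psi (v ^ 2) (2 * t + 0)) t (hv v t + hv (- v) t)).
  { intro t. apply dlim_eq with (/2 * (hv (v ^ 2) (2 * t + 0) * 2)).
    - exact (derivable_pt_lim_scal (fun t => Psi (v ^ 2) (2 * t + 0)) (/2) t _ (dlim_Psi_aff (v ^ 2) 2 0 t Hv2)).
    - unfold hv. assert (A1 := hv_pos v t Hv). assert (A2 := hv_pos (- v) t Hv').
      rewrite <- ln_mult by auto. replace (2 * t + 0) with (2 * t) by ring.
      rewrite cos_2a_cos. field_simplify. f_equal. ring. }
  assert (K := same_deriv_const _ _ _ (-10) 10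
     (fun t _ => D2 t) (fun t _ => D3 t) 0 PI ltac:(lra) ltac:(lra)).
  cbv beta in K. replace (2 * 0 + 0) with 0 in K by ring.
  replace (2 * PI + 0) with (2 * PI) in K by ring.
  rewrite Psi_2PI in K by auto.
  rewrite !Psi_0 in K by auto.
  assert (E := J_opp v Hv). unfold J in *. lra.
Qed.

Lemma ln_le' x y : 0 < x -> x <= y -> ln x <= ln y.
Proof. intros Hx [H|H]; [left; apply ln_increasing; auto| subst; lra]. Qed.

Lemma J_bound u v : 0 < u < 1 -> Rabs v <= u -> Rabs (J v) <= PI * (ln 4 - ln ((1 - u) ^ 2)).
Proof.
  intros Hu Hv. assert (Hv1 : Rabs v < 1) by lra. assert (HP := pi_bounds).
  destruct (MVT_cor2 (Psi v) (hv v) 0 PI ltac:(lra) (fun c _ => Psi_deriv v Hv1 c)) as [c [Hc _]].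
  unfold J. rewrite Psi_0 in Hc by auto. rewrite Rminus_0_r in Hc. rewrite Hc, Rminus_0_r.
  rewrite Rabs_mult, (Rabs_right PI) by lra. rewrite Rmult_comm.
  apply Rmult_le_compat_l; [lra|].
  assert (A := hv_arg v c Hv1). assert (A0 := hv_pos v c Hv1).
  assert (Hav : 0 <= Rabs v) by apply Rabs_pos.
  assert (L1 : ln ((1 - u) ^ 2) <= hv v c).
  { unfold hv. apply ln_le'. apply pow_lt; lra. apply Rle_trans with ((1 - Rabs v) ^ 2); [|lra].
    apply pow_incr; lra. }
  assert (L2 : hv v c <= ln 4).
  { unfold hv. apply ln_le'; auto. apply Rle_trans with ((1 + Rabs v) ^ 2); [lra|]. nra. }
  assert (L3 : ln ((1 - u) ^ 2) < 0).
  { rewrite <- ln_1. apply ln_increasing. apply pow_lt; lra. nra. }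
  assert (L4 : 0 < ln 4). { rewrite <- ln_1. apply ln_increasing; lra. }
  unfold Rabs; destruct Rcase_abs; lra.
Qed.

Fixpoint sq_iter (u : R) (n : nat) : R := match n with O => u | S m => (sq_iter u m) ^ 2 end.

Lemma sq_iter_props u n : 0 < u < 1 -> 0 < sq_iter u n <= u /\ J (sq_iter u n) = 2 ^ n * J u.
Proof.
  intros Hu. induction n as [|n [[H1 H2] H3]]; cbn [sq_iter].
  - split; [lra|simpl; ring].
  - split; [split; nra|]. rewrite J_sq. rewrite H3. change (2 ^ S n) with (2 * 2 ^ n). ring.
    rewrite Rabs_right; lra.
Qed.

Lemma J_zero u : 0 < u < 1 -> J u = 0.
Proof.
  intros Hu. destruct (Req_dec (J u) 0) as [h|h]; [exact h|exfalso].
  set (B := PI * (ln 4 - ln ((1 - u) ^ 2))).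
  assert (HJ : 0 < Rabs (J u)) by (apply Rabs_pos_lt; auto).
  destruct (Pow_x_infinity 2 ltac:(rewrite Rabs_right; lra) (B / Rabs (J u) + 1)) as [N HN].
  assert (H1 := HN N (le_n N)).
  destruct (sq_iter_props u N Hu) as [[P1 P2] P3].
  assert (H2 := J_bound u (sq_iter u N) Hu ltac:(rewrite Rabs_right; lra)).
  rewrite P3, Rabs_mult in H2. fold B in H2.
  assert (H3 : Rabs (2 ^ N) * Rabs (J u) >= (B / Rabs (J u) + 1) * Rabs (J u)).
  { apply Rmult_ge_compat_r; lra. }
  replace ((B / Rabs (J u) + 1) * Rabs (J u)) with (B + Rabs (J u)) in H3 by (field; lra).
  lra.
Qed.

Lemma G_props z : 2 < z -> 0 < G z < 1 /\ z = G z + / G z /\ sqrt (z ^ 2 - 4) = / G z - G z.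
Proof.
  intros Hz. set (s := sqrt (z ^ 2 - 4)).
  assert (Hs2 : s * s = z ^ 2 - 4) by (apply sqrt_sqrt; nra).
  assert (Hs0 : 0 < s) by (apply sqrt_lt_R0; nra).
  assert (Hsz : s < z) by nra.
  assert (Hsz2 : z - 2 < s) by nra.
  unfold G. fold s.
  assert (Hinv : / ((z - s) / 2) = (z + s) / 2).
  { field_simplify_eq; [nra|lra]. }
  rewrite Hinv. split; [split; lra|]. split; lra.
Qed.

Lemma part2 lam z : 1/2 < lam -> 2 < z ->
  exists I : R,
       ImproperInt (fun x => ln (z - x) * arcsine_dens x) (-2) 2 I /\
       Rpower (G z) (lam - 1) / sqrt (z ^ 2 - 4)
         = exp (- lam * ((1 - / lam) * I
                         + / lam * ((ln (z - (-2)) + ln (z - 2)) / 2))).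
Proof.
  intros Hl Hz. destruct (G_props z Hz) as [Hu [Hzu Hs]]. set (u := G z) in *.
  assert (Hau : Rabs u < 1) by (rewrite Rabs_right; lra).
  assert (Hf : forall x, -2 < x < 2 -> ln (z - x) * arcsine_dens x = (hv u (acos (x / 2)) + - ln u) * arcsine_dens x).
  { intros x Hx. f_equal. unfold hv. rewrite cos_acos by lra.
    assert (P : 0 < 1 - 2 * u * (x / 2) + u ^ 2) by nra.
    replace (z - x) with ((1 - 2 * u * (x / 2) + u ^ 2) * / u) by (rewrite Hzu; field; lra).
    rewrite ln_mult, ln_Rinv; try lra; apply Rinv_0_lt_compat; lra. }
  exists (- ln u). split.
  - assert (Hi := arc_improper (fun t => hv u t + - ln u) (fun t => Psi u t + (- ln u * t + 0))
        (fun x => ln (z - x) * arcsine_dens x) (-2) 2 ltac:(lra) ltac:(lra) ltac:(lra)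
        (fun t => derivable_pt_lim_plus (Psi u) (fun t => - ln u * t + 0) t _ _ (Psi_deriv u Hau t) (dlim_lin _ _ t))
        (fun t => continuity_pt_plus (hv u) (fct_cte (- ln u)) t (hv_cont u Hau t) (continuity_pt_const (fct_cte (- ln u)) t (fun a b => eq_refl)))
        Hf).
    rewrite acos_m1, acos_p1 in Hi. rewrite Psi_0 in Hi by auto.
    assert (HJ := J_zero u Hu). unfold J in HJ. rewrite HJ in Hi.
    replace (- ln u) with ((0 + (- ln u * PI + 0) - (0 + (- ln u * 0 + 0))) / PI).
    + exact Hi.
    + assert (HP := PI_RGT_0). field. lra.
  - rewrite <- Rpower_sqrt by nra. unfold Rpower, Rdiv at 1. rewrite <- exp_Ropp. rewrite <- exp_plus.
    f_equal. replace (z ^ 2 - 4) with ((z - -2) * (z - 2)) by ring.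
    rewrite ln_mult by lra. field. lra.
Qed.

Lemma Rpower_pos x e : 0 < Rpower x e.
Proof. unfold Rpower. apply exp_pos. Qed.

Lemma Rpower_inv x e : 0 < x -> Rpower (/ x) e = / Rpower x e.
Proof. intros Hx. unfold Rpower. rewrite ln_Rinv by auto. rewrite <- exp_Ropp. f_equal. ring. Qed.

Lemma Rpower_div x y e : 0 < x -> 0 < y -> Rpower (x / y) e = Rpower x e / Rpower y e.
Proof.
  intros Hx Hy. unfold Rdiv. rewrite <- Rpower_mult_distr by (auto; apply Rinv_0_lt_compat; auto).
  rewrite Rpower_inv by auto. reflexivity.
Qed.

Lemma dlim_quad x : derivable_pt_lim (fun t => 4 - t ^ 2) x (-2 * x).
Proof.
  apply dlim_eq with (0 - INR 2 * x ^ pred 2); [|simpl; ring].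
  exact (derivable_pt_lim_minus (fct_cte 4) (fun t => t ^ 2) x _ _ (derivable_pt_lim_const 4 x) (derivable_pt_lim_pow x 2)).
Qed.

Lemma dlim_Rpow_quad p x : -2 < x < 2 ->
  derivable_pt_lim (fun t => Rpower (4 - t ^ 2) p) x (p * Rpower (4 - x ^ 2) (p - 1) * (-2 * x)).
Proof.
  intros Hx.
  exact (derivable_pt_lim_comp (fun t => 4 - t ^ 2) (fun s => Rpower s p) x _ _ (dlim_quad x)
    (derivable_pt_lim_power (4 - x ^ 2) p ltac:(nra))).
Qed.

Lemma cont_Rpow_quad p x : -2 < x < 2 -> continuity_pt (fun t => Rpower (4 - t ^ 2) p) x.
Proof. intros Hx. exact (dlim_cont _ _ _ (dlim_Rpow_quad p x Hx)). Qed.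

Lemma Rpow_small p : 0 < p -> forall eps, 0 < eps -> exists d, 0 < d /\ forall s, 0 < s < d -> Rpower s p < eps.
Proof.
  intros Hp eps Heps. exists (Rpower eps (/ p)). split; [apply Rpower_pos|].
  intros s Hs. assert (E : Rpower (Rpower eps (/ p)) p = eps).
  { rewrite Rpower_mult. replace (/ p * p) with 1 by (field; lra). apply Rpower_1; auto. }
  rewrite <- E. apply Rlt_Rpower_l; auto; lra.
Qed.

Lemma Rpow_quad_limL p : 0 < p -> limL (fun t => Rpower (4 - t ^ 2) p) 2 0.
Proof.
  intros Hp eps Heps. destruct (Rpow_small p Hp eps Heps) as [d [Hd H]].
  exists (Rmin (d / 4) 1). split; [apply Rmin_pos; lra|]. intros t Ht.
  assert (H1 := Rmin_l (d/4) 1). assert (H2 := Rmin_r (d/4) 1).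
  rewrite Rminus_0_r, Rabs_right by (left; apply Rpower_pos). apply H. nra.
Qed.

Lemma Rpow_quad_limR p : 0 < p -> limR (fun t => Rpower (4 - t ^ 2) p) (-2) 0.
Proof.
  intros Hp. apply limR_of_refl. replace (- -2) with 2 by ring.
  apply limL_ext with (F := fun t => Rpower (4 - t ^ 2) p) (r := 1); [lra| |apply Rpow_quad_limL; auto].
  intros t _. f_equal. ring.
Qed.

Section W.
Variable lam : R.
Hypothesis Hl : 1/2 < lam.
Definition wf (y : R) : R := Rpower (4 - y ^ 2) (lam - 3 / 2).
Definition Wp (t : R) : R := RI wf 0 t.

Lemma wf_cont x : -2 < x < 2 -> continuity_pt wf x.
Proof. apply cont_Rpow_quad. Qed.

Lemma Wp_deriv x : -2 < x < 2 -> derivable_pt_lim Wp x (wf x).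
Proof. intros Hx. unfold Wp. apply prim_deriv with (a := -2) (b := 2); auto; [apply wf_cont|lra]. Qed.

Lemma Wp_0 : Wp 0 = 0.
Proof.
  unfold Wp. rewrite (RI_eq _ _ _ (continuity_implies_RiemannInt (Rle_refl 0) (fun t Ht => wf_cont t ltac:(lra)))).
  apply RiemannInt_P9.
Qed.

Lemma wf_even t : wf (-1 * t + 0) = wf t.
Proof. unfold wf. f_equal. ring. Qed.

Lemma Wp_odd t : -2 < t < 2 -> Wp (-1 * t + 0) = - Wp t.
Proof.
  intros Ht.
  assert (D1 : forall s, -2 < s < 2 -> derivable_pt_lim (fun s => Wp (-1 * s + 0)) s (- wf s)).
  { intros s Hs. apply dlim_eq with (wf (-1 * s + 0) * -1); [|rewrite wf_even; ring].
    exact (derivable_pt_lim_comp (fun s => -1 * s + 0) Wp s _ _ (dlim_lin _ _ s) (Wp_deriv (-1 * s + 0) ltac:(lra))). }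
  assert (D2 : forall s, -2 < s < 2 -> derivable_pt_lim (fun s => - Wp s) s (- wf s)).
  { intros s Hs. exact (derivable_pt_lim_opp Wp s _ (Wp_deriv s Hs)). }
  assert (K := same_deriv_const _ _ _ (-2) 2 D1 D2 t 0 Ht ltac:(lra)).
  cbv beta in K. replace (-1 * 0 + 0) with 0 in K by ring. rewrite Wp_0 in K. lra.
Qed.

Definition Mw := Rpower 2 (lam - 3/2) + Rpower 4 (lam - 3/2).

Lemma wf_le t : 0 <= t < 2 -> wf t <= Mw * Rpower (2 - t) (lam - 3/2).
Proof.
  intros Ht. unfold wf, Mw. replace (4 - t ^ 2) with ((2 - t) * (2 + t)) by ring.
  rewrite <- Rpower_mult_distr by lra. rewrite Rmult_comm.
  apply Rmult_le_compat_r; [left; apply Rpower_pos|].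
  assert (P2 := Rpower_pos 2 (lam - 3/2)). assert (P4 := Rpower_pos 4 (lam - 3/2)).
  destruct (Rle_dec 0 (lam - 3/2)) as [h|h].
  - assert (Rpower (2 + t) (lam - 3/2) <= Rpower 4 (lam - 3/2)) by (apply Rle_Rpower_l; lra). lra.
  - assert (Rpower (2 + t) (lam - 3/2) <= Rpower 2 (lam - 3/2)); [|lra].
    replace (lam - 3/2) with (- (3/2 - lam)) by ring. rewrite !Rpower_Ropp.
    apply Rinv_le_contravar; [apply Rpower_pos|]. apply Rle_Rpower_l; lra.
Qed.

Lemma Wp_limL : exists LW, limL Wp 2 LW.
Proof.
  set (p := lam - 1/2). assert (Hp : 0 < p) by (unfold p; lra).
  set (k := - Mw / p). set (m := Mw * Rpower 2 p / p).
  set (Q := fun t => k * Rpower (-1 * t + 2) p + m).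
  assert (HM : 0 < Mw) by (unfold Mw; assert (P2 := Rpower_pos 2 (lam - 3/2)); assert (P4 := Rpower_pos 4 (lam - 3/2)); lra).
  assert (DQ : forall t, t < 2 -> derivable_pt_lim Q t (Mw * Rpower (2 - t) (lam - 3/2))).
  { intros t Ht. unfold Q.
    apply dlim_eq with (k * (p * Rpower (-1 * t + 2) (p - 1) * -1) + 0).
    - apply (derivable_pt_lim_plus (fun t => k * Rpower (-1 * t + 2) p) (fct_cte m)); [|apply derivable_pt_lim_const].
      apply (derivable_pt_lim_scal (fun t => Rpower (-1 * t + 2) p)).
      exact (derivable_pt_lim_comp (fun t => -1 * t + 2) (fun s => Rpower s p) t _ _ (dlim_lin _ _ t)
        (derivable_pt_lim_power (-1 * t + 2) p ltac:(lra))).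
    - unfold k, p. replace (-1 * t + 2) with (2 - t) by ring. replace (lam - 1/2 - 1) with (lam - 3/2) by field.
      field. lra. }
  assert (Hinc : forall s t, 0 <= s <= t -> t < 2 -> Wp s <= Wp t).
  { apply incr_of_deriv with (f := wf). intros x Hx. split; [apply Wp_deriv; lra|left; apply Rpower_pos]. }
  assert (Hb : forall t, 0 <= t < 2 -> Wp t <= m).
  { intros t Ht.
    assert (H := incr_of_deriv (fun t => Q t - Wp t) (fun t => Mw * Rpower (2 - t) (lam - 3/2) - wf t) 0 2).
    assert (H1 : Q 0 - Wp 0 <= Q t - Wp t).
    { apply H; [|lra|lra]. intros x Hx. split.
      - exact (derivable_pt_lim_minus Q Wp x _ _ (DQ x ltac:(lra)) (Wp_deriv x ltac:(lra))).
      - assert (E := wf_le x Hx). cbv beta. lra. }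
    rewrite Wp_0 in H1. unfold Q in H1. replace (-1 * 0 + 2) with 2 in H1 by ring.
    assert (E : k * Rpower 2 p + m = 0) by (unfold k, m; field; lra). 
    assert (k * Rpower (-1 * t + 2) p <= 0).
    { unfold k. assert (P := Rpower_pos (-1 * t + 2) p). 
      replace (- Mw / p * Rpower (-1 * t + 2) p) with (- (Mw * Rpower (-1 * t + 2) p / p)) by (field; lra).
      assert (0 < Mw * Rpower (-1 * t + 2) p / p) by (apply Rdiv_lt_0_compat; [apply Rmult_lt_0_compat|]; lra).
      lra. }
    lra. }
  apply (incr_limL Wp 0 2 m); [lra|exact Hinc|exact Hb].
Qed.

Lemma C_exists : exists C, ImproperInt wf (-2) 2 C /\ exists LW, C = 2 * LW /\ limL Wp 2 LW /\ limR Wp (-2) (- LW).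
Proof.
  destruct Wp_limL as [LW HL].
  assert (HR : limR Wp (-2) (- LW)).
  { apply limR_of_refl. replace (- -2) with 2 by ring. replace (- LW) with (-1 * LW) by ring.
    apply limL_ext with (F := fun t => -1 * Wp t) (r := 4); [lra| |apply limL_scal; auto].
    intros t Ht. replace (- t) with (-1 * t + 0) by ring. rewrite Wp_odd by lra. ring.
    }
  exists (LW - - LW). split.
  - apply improper_of_prim with (F := Wp); [lra|apply Wp_deriv|apply wf_cont|exact HR|exact HL].
  - exists LW. split; [ring|split; auto].
Qed.
End W.

Lemma dlim_quad_aff a b x : derivable_pt_lim (fun y => a + b * y ^ 2) x (b * (2 * x)).
Proof.
  apply dlim_eq with (0 + b * (INR 2 * x ^ pred 2)); [|simpl; ring].
  apply (derivable_pt_lim_plus (fct_cte a) (mult_real_fct b (fun y => y ^ 2))).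
  - apply derivable_pt_lim_const.
  - apply derivable_pt_lim_scal. apply derivable_pt_lim_pow.
Qed.

Lemma Rabs_le_b x a : Rabs x <= a -> - a <= x <= a.
Proof. unfold Rabs; destruct Rcase_abs; intros; lra. Qed.

Section Main.
Variable lam u : R.
Hypothesis Hl : 1/2 < lam.
Hypothesis Hu : 0 < u < 1.

Definition cu (y : R) : R := sqrt ((1 - u ^ 2) + (u ^ 2 / 4) * y ^ 2).

Lemma cu_ge y : sqrt (1 - u ^ 2) <= cu y.
Proof. unfold cu. apply sqrt_le_1_alt. assert (0 <= u ^ 2 / 4 * y ^ 2) by (apply Rmult_le_pos; nra). lra. Qed.

Lemma c0_pos : 0 < sqrt (1 - u ^ 2).
Proof. apply sqrt_lt_R0. nra. Qed.

Lemma cu_pos y : 0 < cu y.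
Proof. assert (H := cu_ge y). assert (H0 := c0_pos). lra. Qed.

Lemma cu_sq y : cu y * cu y = (1 - u ^ 2) + (u ^ 2 / 4) * y ^ 2.
Proof. unfold cu. apply sqrt_sqrt. assert (0 <= u ^ 2 / 4 * y ^ 2) by (apply Rmult_le_pos; nra). nra. Qed.

Lemma cu_cont y : continuity_pt cu y.
Proof.
  unfold cu. apply (continuity_pt_comp (fun y => (1 - u ^ 2) + (u ^ 2 / 4) * y ^ 2) sqrt).
  - exact (dlim_cont _ _ _ (dlim_quad_aff _ _ y)).
  - apply continuity_pt_sqrt. assert (0 <= u ^ 2 / 4 * y ^ 2) by (apply Rmult_le_pos; nra). nra.
Qed.

Definition k3 (y : R) : R := Rpower (4 - y ^ 2) (lam - 1/2) * y / (cu y * (1 + cu y)).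

Lemma k3_cont y : -2 < y < 2 -> continuity_pt k3 y.
Proof.
  intros Hy. unfold k3.
  assert (C1 := cont_Rpow_quad (lam - 1/2) y Hy).
  assert (C2 := cu_cont y).
  apply (continuity_pt_div (fun y => Rpower (4 - y ^ 2) (lam - 1/2) * y) (fun y => cu y * (1 + cu y))).
  - apply (continuity_pt_mult (fun y => Rpower (4 - y ^ 2) (lam - 1/2)) id); auto.
    apply derivable_continuous_pt, derivable_pt_id.
  - apply (continuity_pt_mult cu (fun y => 1 + cu y)); auto.
    apply (continuity_pt_plus (fct_cte 1) cu); auto. apply continuity_pt_const. intros a b; reflexivity.
  - assert (H := cu_pos y). assert (0 < cu y * (1 + cu y)) by nra. lra.
Qed.

Definition P3 (t : R) : R := RI k3 0 t.

Lemma P3_deriv x : -2 < x < 2 -> derivable_pt_lim P3 x (k3 x).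
Proof. intros Hx. unfold P3. apply prim_deriv with (a := -2) (b := 2); auto; [apply k3_cont|lra]. Qed.

Lemma P3_0 : P3 0 = 0.
Proof.
  unfold P3. rewrite (RI_eq _ _ _ (continuity_implies_RiemannInt (Rle_refl 0) (fun t Ht => k3_cont t ltac:(lra)))).
  apply RiemannInt_P9.
Qed.

Lemma k3_odd t : k3 (-1 * t + 0) = - k3 t.
Proof.
  unfold k3. replace (cu (-1 * t + 0)) with (cu t) by (unfold cu; f_equal; ring).
  replace (4 - (-1 * t + 0) ^ 2) with (4 - t ^ 2) by ring.
  assert (H := cu_pos t). field. nra.
Qed.

Lemma P3_even t : -2 < t < 2 -> P3 (-1 * t + 0) = P3 t.
Proof.
  intros Ht.
  assert (D1 : forall s, -2 < s < 2 -> derivable_pt_lim (fun s => P3 (-1 * s + 0)) s (k3 s)).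
  { intros s Hs. apply dlim_eq with (k3 (-1 * s + 0) * -1); [|rewrite k3_odd; ring].
    exact (derivable_pt_lim_comp (fun s => -1 * s + 0) P3 s _ _ (dlim_lin _ _ s) (P3_deriv (-1 * s + 0) ltac:(lra))). }
  assert (K := same_deriv_const _ _ _ (-2) 2 D1 P3_deriv t 0 Ht ltac:(lra)).
  cbv beta in K. replace (-1 * 0 + 0) with 0 in K by ring. lra.
Qed.

Definition M3 := Rpower 4 (lam - 1/2) * 2 / sqrt (1 - u ^ 2).

Lemma k3_bound y : -2 < y < 2 -> Rabs (k3 y) <= M3.
Proof.
  intros Hy. set (q := cu y * (1 + cu y)). set (Rp := Rpower (4 - y ^ 2) (lam - 1/2)).
  assert (Hc := cu_ge y). assert (Hc0 := c0_pos). assert (Hcp := cu_pos y).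
  assert (Hq : sqrt (1 - u ^ 2) <= q) by (unfold q; nra).
  assert (HRp : 0 < Rp) by apply Rpower_pos.
  assert (HRp4 : Rp <= Rpower 4 (lam - 1/2)) by (apply Rle_Rpower_l; nra).
  assert (E : k3 y = Rp * y / q) by reflexivity.
  rewrite E. unfold M3. unfold Rdiv. rewrite !Rabs_mult, Rabs_inv.
  rewrite (Rabs_right Rp) by lra. rewrite (Rabs_right q) by lra.
  assert (Ha : Rabs y <= 2) by (apply Rabs_le; lra).
  assert (Hi : / q <= / sqrt (1 - u ^ 2)) by (apply Rinv_le_contravar; lra).
  assert (0 <= Rabs y) by apply Rabs_pos.
  assert (0 < / q) by (apply Rinv_0_lt_compat; lra).
  apply Rmult_le_compat; try nra.
Qed.

Lemma M3_pos : 0 < M3.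
Proof. unfold M3. assert (H := Rpower_pos 4 (lam - 1/2)). assert (H0 := c0_pos). apply Rdiv_lt_0_compat; lra. Qed.

Lemma P3_limL : exists L3, limL P3 2 L3.
Proof.
  assert (HM := M3_pos).
  set (H := fun t => P3 t + (M3 * t + 0)).
  assert (Hinc : forall s t, 0 <= s <= t -> t < 2 -> H s <= H t).
  { apply incr_of_deriv with (f := fun t => k3 t + M3). intros x Hx. split.
    - exact (derivable_pt_lim_plus P3 (fun t => M3 * t + 0) x _ _ (P3_deriv x ltac:(lra)) (dlim_lin _ _ x)).
    - assert (B := k3_bound x ltac:(lra)). apply Rabs_le_b in B. lra. }
  assert (Hb : forall t, 0 <= t < 2 -> H t <= 4 * M3).
  { intros t Ht.
    assert (Hi := incr_of_deriv (fun t => (M3 * t + 0) - P3 t) (fun t => M3 - k3 t) 0 2).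
    assert (H1 : (M3 * 0 + 0) - P3 0 <= (M3 * t + 0) - P3 t).
    { apply Hi; [|lra|lra]. intros x Hx. split.
      - exact (derivable_pt_lim_minus (fun t => M3 * t + 0) P3 x _ _ (dlim_lin _ _ x) (P3_deriv x ltac:(lra))).
      - assert (B := k3_bound x ltac:(lra)). apply Rabs_le_b in B. cbv beta. lra. }
    rewrite P3_0 in H1. unfold H. nra. }
  destruct (incr_limL H 0 2 (4 * M3) ltac:(lra) Hinc Hb) as [LH HLH].
  exists (LH + (- M3 * 2 + 0)).
  assert (HL2 : limL (fun t => - M3 * t + 0) 2 (- M3 * 2 + 0)).
  { exact (cont_limL (fun t => - M3 * t + 0) 2 (dlim_cont _ _ _ (dlim_lin _ _ 2))). }
  apply limL_ext with (F := fun t => H t + (- M3 * t + 0)) (r := 1); [lra| |exact (limL_plus _ _ _ _ _ HLH HL2)].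
  intros t _. unfold H. ring.
Qed.

Definition P1 (y : R) : R := - / (2 * (lam - 1/2)) * Rpower (4 - y ^ 2) (lam - 1/2).

Lemma P1_deriv y : -2 < y < 2 -> derivable_pt_lim P1 y (y * wf lam y).
Proof.
  intros Hy. unfold P1.
  apply dlim_eq with (- / (2 * (lam - 1/2)) * ((lam - 1/2) * Rpower (4 - y ^ 2) (lam - 1/2 - 1) * (-2 * y))).
  - apply (derivable_pt_lim_scal (fun y => Rpower (4 - y ^ 2) (lam - 1/2))). apply dlim_Rpow_quad; auto.
  - unfold wf. replace (lam - 1/2 - 1) with (lam - 3/2) by field. field. lra.
Qed.

Lemma P1_limL : limL P1 2 0.
Proof.
  unfold P1. replace 0 with (- / (2 * (lam - 1/2)) * 0) by ring.
  apply (limL_scal (fun y => Rpower (4 - y ^ 2) (lam - 1/2))). apply Rpow_quad_limL. lra.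
Qed.

Lemma P1_limR : limR P1 (-2) 0.
Proof.
  unfold P1. replace 0 with (- / (2 * (lam - 1/2)) * 0) by ring.
  apply (limR_scal (fun y => Rpower (4 - y ^ 2) (lam - 1/2))). apply Rpow_quad_limR. lra.
Qed.

End Main.

Section Main2.
Variable lam u : R.
Hypothesis Hl : 1/2 < lam.
Hypothesis Hu : 0 < u < 1.

Definition Kc := Rpower u lam / (1 - u ^ 2).
Definition Gp (y : R) : R := Kc * (Wp lam y + (u / 2 * P1 lam y + u ^ 3 / 8 * P3 lam u y)).
Definition Gpd (y : R) : R := Kc * (wf lam y + (u / 2 * (y * wf lam y) + u ^ 3 / 8 * k3 lam u y)).

Lemma Gp_deriv y : -2 < y < 2 -> derivable_pt_lim Gp y (Gpd y).
Proof.
  intros Hy. unfold Gp, Gpd.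
  apply (derivable_pt_lim_scal (fun y => Wp lam y + (u / 2 * P1 lam y + u ^ 3 / 8 * P3 lam u y))).
  apply (derivable_pt_lim_plus (Wp lam) (fun y => u / 2 * P1 lam y + u ^ 3 / 8 * P3 lam u y)).
  - apply Wp_deriv; auto.
  - apply (derivable_pt_lim_plus (fun y => u / 2 * P1 lam y) (fun y => u ^ 3 / 8 * P3 lam u y)).
    + apply (derivable_pt_lim_scal (P1 lam)). apply P1_deriv; auto.
    + apply (derivable_pt_lim_scal (P3 lam u)). apply P3_deriv; auto.
Qed.

Definition Df (x : R) : R := 1 + u ^ 2 - u * x.
Definition psi (x : R) : R := (x - 2 * u) / sqrt (Df x).

Lemma Df_pos x : -2 <= x <= 2 -> 0 < Df x.
Proof. intros Hx. unfold Df. nra. Qed.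

Lemma psi_deriv x : -2 <= x <= 2 -> derivable_pt_lim psi x ((2 - u * x) / (2 * Df x * sqrt (Df x))).
Proof.
  intros Hx. assert (HD := Df_pos x Hx). assert (Hs := sqrt_lt_R0 _ HD).
  assert (Hss := sqrt_sqrt _ (Rlt_le _ _ HD)).
  assert (E : forall t, - u * t + (1 + u ^ 2) = Df t) by (intro; unfold Df; ring).
  assert (H1 : derivable_pt_lim (fun t => sqrt (- u * t + (1 + u ^ 2))) x (/ (2 * sqrt (Df x)) * - u)).
  { assert (HD' : 0 < - u * x + (1 + u ^ 2)) by (unfold Df in HD; lra).
    assert (H0 := derivable_pt_lim_sqrt (- u * x + (1 + u ^ 2)) HD').
    assert (H2 := derivable_pt_lim_comp (fun t => - u * t + (1 + u ^ 2)) sqrt x _ _ (dlim_lin _ _ x) H0).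
    rewrite E in H2. exact H2. }
  assert (H3 := derivable_pt_lim_div (fun t => 1 * t + - 2 * u) (fun t => sqrt (- u * t + (1 + u ^ 2))) x _ _
     (dlim_lin _ _ x) H1 ltac:(cbv beta; rewrite E; lra)).
  apply (dlim_ext _ psi) in H3.
  - apply (dlim_eq _ _ _ _ H3). cbv beta. rewrite E. unfold Rsqr.
    replace (1 * x + -2 * u) with (x - 2 * u) by ring.
    set (s := sqrt (Df x)) in *. rewrite <- Hss.
    assert (Hx' : x = (1 + u ^ 2 - s * s) / u) by (rewrite Hss; unfold Df; field; lra).
    rewrite Hx'. field. lra.
  - intro t. unfold psi, div_fct, Df. f_equal; [ring|f_equal; ring].
Qed.


Lemma key_identity x : -2 < x < 2 ->
  Gpd (psi x) * ((2 - u * x) / (2 * Df x * sqrt (Df x))) =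
  Rpower (4 - x ^ 2) (lam - 3 / 2) / Rpower ((u + / u) - x) lam.
Proof.
  intros Hx. assert (HD := Df_pos x ltac:(lra)).
  assert (Hs := sqrt_lt_R0 _ HD). assert (Hss := sqrt_sqrt _ (Rlt_le _ _ HD)).
  set (s := sqrt (Df x)) in *.
  assert (Hx' : x = (1 + u ^ 2 - s * s) / u) by (rewrite Hss; unfold Df; field; lra).
  assert (Hux : 0 < 2 - u * x) by nra.
  set (y := psi x).
  assert (Hy : y = (x - 2 * u) / s) by reflexivity.
  assert (Hy4 : 4 - y ^ 2 = (4 - x ^ 2) / Df x).
  { rewrite Hy, <- Hss. rewrite Hx' at 1 2. field. lra. }
  assert (Hy4p : 0 < 4 - y ^ 2) by (rewrite Hy4; apply Rdiv_lt_0_compat; nra).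
  assert (Hc : cu u y = (2 - u * x) / (2 * s)).
  { unfold cu. apply sqrt_lem_1.
    - assert (0 <= u ^ 2 / 4 * y ^ 2) by (apply Rmult_le_pos; nra). nra.
    - left; apply Rdiv_lt_0_compat; lra.
    - rewrite Hy. rewrite Hx'. field. lra. }
  assert (Hw : wf lam y = Rpower (4 - x ^ 2) (lam - 3/2) / Rpower (Df x) (lam - 3/2)).
  { unfold wf. rewrite Hy4. apply Rpower_div; nra. }
  assert (Hk : k3 lam u y = wf lam y * (4 - y ^ 2) * y / (cu u y * (1 + cu u y))).
  { unfold k3, wf. replace (lam - 1/2) with ((lam - 3/2) + 1) by field.
    rewrite Rpower_plus, Rpower_1 by lra. reflexivity. }
  assert (Hz : Rpower (u + / u - x) lam = Rpower (Df x) lam / Rpower u lam).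
  { replace (u + / u - x) with (Df x / u) by (unfold Df; field; lra). apply Rpower_div; lra. }
  assert (HDl : Rpower (Df x) lam = Rpower (Df x) (lam - 3/2) * Df x * s).
  { replace lam with ((lam - 3/2) + 1 + / 2) at 1 by field.
    rewrite !Rpower_plus, Rpower_1, Rpower_sqrt by lra. reflexivity. }
  unfold Gpd, Kc. rewrite Hk, Hw, Hc, Hy4, Hz, HDl. rewrite Hy.
  assert (PA := Rpower_pos (4 - x ^ 2) (lam - 3/2)).
  assert (PD := Rpower_pos (Df x) (lam - 3/2)).
  assert (PU := Rpower_pos u lam).
  set (A := Rpower (4 - x ^ 2) (lam - 3/2)) in *. set (RD := Rpower (Df x) (lam - 3/2)) in *.
  set (Ru := Rpower u lam) in *. clearbody A RD Ru y.
  rewrite <- Hss. rewrite Hx'.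
  field. repeat split; nra.
Qed.

End Main2.

Lemma psi_at2 u : 0 < u < 1 -> psi u 2 = 2.
Proof.
  intros Hu. unfold psi, Df. replace (1 + u ^ 2 - u * 2) with ((1 - u) * (1 - u)) by ring.
  rewrite sqrt_square by lra. field. lra.
Qed.

Lemma psi_atm2 u : 0 < u < 1 -> psi u (-2) = -2.
Proof.
  intros Hu. unfold psi, Df. replace (1 + u ^ 2 - u * -2) with ((1 + u) * (1 + u)) by ring.
  rewrite sqrt_square by lra. field. lra.
Qed.

Lemma psi_range u x : 0 < u < 1 -> -2 < x < 2 -> -2 < psi u x < 2.
Proof.
  intros Hu Hx. assert (HD := Df_pos u Hu x ltac:(lra)).
  assert (Hs := sqrt_lt_R0 _ HD). assert (Hss := sqrt_sqrt _ (Rlt_le _ _ HD)).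
  unfold psi. set (s := sqrt (Df u x)) in *. unfold Df in Hss.
  assert (H : (x - 2 * u) ^ 2 < (2 * s) ^ 2) by nra.
  assert (H2 : Rabs (x - 2 * u) < Rabs (2 * s)) by (apply Rsqr_lt_abs_0; unfold Rsqr; nra).
  rewrite (Rabs_right (2 * s)) in H2 by lra. apply Rabs_def2 in H2.
  split; [apply Rmult_lt_reg_r with s; [lra|]; unfold Rdiv; rewrite Rmult_assoc, Rinv_l by lra; lra
         |apply Rmult_lt_reg_r with s; [lra|]; unfold Rdiv; rewrite Rmult_assoc, Rinv_l by lra; lra].
Qed.

Lemma psi_limL_prop u : 0 < u < 1 ->
  forall eps, 0 < eps -> exists d, 0 < d /\ forall t, 2 - d < t < 2 -> 2 - eps < psi u t < 2.
Proof.
  intros Hu eps Heps.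
  assert (Hc := cont_limL (psi u) 2 (dlim_cont _ _ _ (psi_deriv u Hu 2 ltac:(lra)))).
  rewrite psi_at2 in Hc by auto.
  destruct (Hc eps Heps) as [d [Hd H]]. exists (Rmin d 4). split; [apply Rmin_pos; lra|].
  intros t Ht. assert (Hm1 := Rmin_l d 4). assert (Hm2 := Rmin_r d 4).
  assert (E := H t ltac:(lra)). apply Rabs_def2 in E. assert (R := psi_range u t Hu ltac:(lra)). lra.
Qed.

Lemma psi_limR_prop u : 0 < u < 1 ->
  forall eps, 0 < eps -> exists d, 0 < d /\ forall t, -2 < t < -2 + d -> -2 < psi u t < -2 + eps.
Proof.
  intros Hu eps Heps.
  assert (Hc := cont_limR (psi u) (-2) (dlim_cont _ _ _ (psi_deriv u Hu (-2) ltac:(lra)))).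
  rewrite psi_atm2 in Hc by auto.
  destruct (Hc eps Heps) as [d [Hd H]]. exists (Rmin d 4). split; [apply Rmin_pos; lra|].
  intros t Ht. assert (Hm1 := Rmin_l d 4). assert (Hm2 := Rmin_r d 4).
  assert (E := H t ltac:(lra)). apply Rabs_def2 in E. assert (R := psi_range u t Hu ltac:(lra)). lra.
Qed.

Lemma fz_cont lam z t : 2 < z -> -2 < t < 2 ->
  continuity_pt (fun x => Rpower (4 - x ^ 2) (lam - 3 / 2) / Rpower (z - x) lam) t.
Proof.
  intros Hz Ht.
  apply (continuity_pt_div (fun x => Rpower (4 - x ^ 2) (lam - 3 / 2)) (fun x => Rpower (z - x) lam)).
  - apply cont_Rpow_quad; auto.
  - apply (cont_ext (fun x => Rpower (-1 * x + z) lam)); [intro; f_equal; ring|].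
    exact (dlim_cont _ _ _ (derivable_pt_lim_comp (fun x => -1 * x + z) (fun s => Rpower s lam) t _ _ (dlim_lin _ _ t)
      (derivable_pt_lim_power (-1 * t + z) lam ltac:(lra)))).
  - assert (H := Rpower_pos (z - t) lam). cbv beta. lra.
Qed.

Lemma part1 lam : 1 / 2 < lam ->
  exists C : R,
     ImproperInt (fun x => Rpower (4 - x ^ 2) (lam - 3 / 2)) (-2) 2 C /\
     forall z : R, 2 < z ->
       ImproperInt (fun x => Rpower (4 - x ^ 2) (lam - 3 / 2) / Rpower (z - x) lam)
         (-2) 2 (C * Rpower (G z) lam / (1 - G z ^ 2)) /\
       C * Rpower (G z) lam / (1 - G z ^ 2)
         = C * Rpower (G z) (lam - 1) / sqrt (z ^ 2 - 4).
Proof.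
  intros Hl. destruct (C_exists lam Hl) as [C [HC [LW [HCe [HL HR]]]]].
  exists C. split; [exact HC|].
  intros z Hz. destruct (G_props z Hz) as [Hu [Hzu Hs]]. set (u := G z) in *. clearbody u.
  destruct (P3_limL lam u Hl Hu) as [L3 HL3].
  assert (HR3 : limR (P3 lam u) (-2) L3).
  { apply limR_of_refl. replace (- -2) with 2 by ring.
    apply limL_ext with (F := P3 lam u) (r := 4); [lra| |exact HL3].
    intros t Ht. replace (- t) with (-1 * t + 0) by ring. rewrite P3_even by (auto; lra). reflexivity. }
  assert (HGb : limL (Gp lam u) 2 (Kc lam u * (LW + (u / 2 * 0 + u ^ 3 / 8 * L3)))).
  { unfold Gp. apply (limL_scal (fun y => Wp lam y + (u / 2 * P1 lam y + u ^ 3 / 8 * P3 lam u y))).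
    apply (limL_plus (Wp lam) (fun y => u / 2 * P1 lam y + u ^ 3 / 8 * P3 lam u y)); [exact HL|].
    apply (limL_plus (fun y => u / 2 * P1 lam y) (fun y => u ^ 3 / 8 * P3 lam u y)).
    - apply (limL_scal (P1 lam)). apply P1_limL; auto.
    - apply (limL_scal (P3 lam u)). exact HL3. }
  assert (HGa : limR (Gp lam u) (-2) (Kc lam u * (- LW + (u / 2 * 0 + u ^ 3 / 8 * L3)))).
  { unfold Gp. apply (limR_scal (fun y => Wp lam y + (u / 2 * P1 lam y + u ^ 3 / 8 * P3 lam u y))).
    apply (limR_plus (Wp lam) (fun y => u / 2 * P1 lam y + u ^ 3 / 8 * P3 lam u y)); [exact HR|].
    apply (limR_plus (fun y => u / 2 * P1 lam y) (fun y => u ^ 3 / 8 * P3 lam u y)).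
    - apply (limR_scal (P1 lam)). apply P1_limR; auto.
    - apply (limR_scal (P3 lam u)). exact HR3. }
  split.
  - replace (C * Rpower u lam / (1 - u ^ 2)) with
      (Kc lam u * (LW + (u / 2 * 0 + u ^ 3 / 8 * L3)) - Kc lam u * (- LW + (u / 2 * 0 + u ^ 3 / 8 * L3)))
      by (unfold Kc; rewrite HCe; field; nra).
    apply improper_of_prim with (F := fun x => Gp lam u (psi u x)).
    + lra.
    + intros t Ht. apply dlim_eq with (Gpd lam u (psi u t) * ((2 - u * t) / (2 * Df u t * sqrt (Df u t)))).
      * exact (derivable_pt_lim_comp (psi u) (Gp lam u) t _ _ (psi_deriv u Hu t ltac:(lra))
                 (Gp_deriv lam u Hl Hu (psi u t) (psi_range u t Hu Ht))).
      * rewrite key_identity by auto. rewrite Hzu. reflexivity.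
    + intros t Ht. apply fz_cont; auto.
    + apply (limR_comp (Gp lam u) (psi u) (-2) (-2)); [exact HGa|apply psi_limR_prop; auto].
    + apply (limL_comp (Gp lam u) (psi u) 2 2); [exact HGb|apply psi_limL_prop; auto].
  - rewrite Hs. replace lam with (lam - 1 + 1) at 1 by ring.
    rewrite Rpower_plus, Rpower_1 by lra. field. split; nra.
Qed.

Theorem mainTheorem2 (lam : R) (hlam : 1 / 2 < lam) :
  (exists C : R,
     ImproperInt (fun x => Rpower (4 - x ^ 2) (lam - 3 / 2)) (-2) 2 C /\
     forall z : R, 2 < z ->
       ImproperInt (fun x => Rpower (4 - x ^ 2) (lam - 3 / 2) / Rpower (z - x) lam)
         (-2) 2 (C * Rpower (G z) lam / (1 - G z ^ 2)) /\
       C * Rpower (G z) lam / (1 - G z ^ 2)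
         = C * Rpower (G z) (lam - 1) / sqrt (z ^ 2 - 4)) /\
  (forall z : R, 2 < z ->
     exists I : R,
       ImproperInt (fun x => ln (z - x) * arcsine_dens x) (-2) 2 I /\
       Rpower (G z) (lam - 1) / sqrt (z ^ 2 - 4)
         = exp (- lam * ((1 - / lam) * I
                         + / lam * ((ln (z - (-2)) + ln (z - 2)) / 2)))) /\
  (forall a b : R, a <= -2 -> 2 <= b -> tau_mass lam a b 1) /\
  (tau_nonneg lam <-> 1 <= lam).
Proof.
  split; [exact (part1 lam hlam)|].
  split; [intros z Hz; exact (part2 lam z hlam Hz)|].
  split; [exact (part3 lam hlam)|exact (part4 lam hlam)].
Qed.
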